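(* Assume (A1)–(A4) below. Then $\alpha_t(\ell)\ge0$ for every compliance type $t\in\mathcal T$ and every instrument $\ell=1,\dots,L$.
   Context: We observe i.i.d. $(Y_i,D_i,\mathbf Z_i)$, $D_i\in\{0,1\}$, $\mathbf Z_i=(Z_{1i},\dots,Z_{Li})'\in\{0,1\}^L$, $L\ge2$. Units have potential outcomes $Y_i(0),Y_i(1)$ and a compliance type $D_i(\cdot):\{0,1\}^L\to\{0,1\}$ with $D_i=D_i(\mathbf Z_i)$; $\mathcal T$ is the set of types, $\theta_t=P(D_i(\cdot)=t)$, and $t(z_\ell,z_{-\ell})$ is type $t$'s treatment at the instrument vector with $\ell$-th coordinate $z_\ell$, others $z_{-\ell}$. $p_\ell=P(Z_{\ell i}=1)$, $\pi_\ell=\mathbb E[D_i\mid Z_{\ell i}=1]-\mathbb E[D_i\mid Z_{\ell i}=0]$, $\Sigma_Z=\mathrm{Var}(\mathbf Z_i)$, $q_\ell(z_{-\ell})=P(Z_{-\ell}=z_{-\ell}\mid Z_\ell=1)$, $q^0_\ell(z_{-\ell})=P(Z_{-\ell}=z_{-\ell}\mid Z_\ell=0)$, $\varphi_t(\ell)=\sum_{z_{-\ell}}[t(1,z_{-\ell})q_\ell(z_{-\ell})-t(0,z_{-\ell})q^0_\ell(z_{-\ell})]$, and $\alpha_t(\ell)=\theta_t\varphi_t(\ell)/\pi_\ell$. Assumptions: (A1) $(Y_i(0),Y_i(1),D_i(\cdot))$ independent of $\mathbf Z_i$. (A2) $D_i(z)$ nondecreasing in each coordinate for every $i$. (A3)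 $p_\ell>0$, $\pi_\ell>0$ for all $\ell$; $\Sigma_Z$ positive definite. (A4) Positive regression dependence: for each $\ell$, $\mathbb E[f(Z_{-\ell})\mid Z_\ell=1]\ge\mathbb E[f(Z_{-\ell})\mid Z_\ell=0]$ for every nondecreasing $f:\{0,1\}^{L-1}\to\mathbb R$. *)

(* Defs.v *)
From HB Require Import structures.
From mathcomp Require Import all_boot all_order all_algebra.
Set Implicit Arguments. Unset Strict Implicit. Unset Printing Implicit Defensive.
Import Order.TTheory GRing.Theory Num.Theory.
Local Open Scope ring_scope.

Section IV.
Variable L : nat.

Definition zvec := {ffun 'I_L -> bool}.
(* z_{-l} : the instrument vector with coordinate l removed *)
Definition zminus (l : 'I_L) := {ffun {j : 'I_L | j != l} -> bool}.
Definition ctype := {ffun zvec -> bool}.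

(* (z_l, z_{-l}) : the vector with l-th coordinate b and others zm *)
Definition zjoin (l : 'I_L) (b : bool) (zm : zminus l) : zvec :=
  [ffun j => match insub j with Some k => zm k | None => b end].

Definition zdrop (l : 'I_L) (z : zvec) : zminus l := [ffun k => z (val k)].

Variable R : realFieldType.
Definition b2R (b : bool) : R := (b : nat)%:R.

(* Pr : joint probability mass function of (D_i(.), Z_i) *)
Variable Pr : {ffun ctype * zvec -> R}.

Definition is_pmf := (forall x, 0 <= Pr x) /\ \sum_x Pr x = 1.

Definition theta (t : ctype) : R := \sum_(z : zvec) Pr (t, z).
Definition pZ (z : zvec) : R := \sum_(t : ctype) Pr (t, z).

Definition pl (l : 'I_L) : R := \sum_(z : zvec) b2R (z l) * pZ z.

(* pi_l = E[D | Z_l = 1] - E[D | Z_l = 0], with D = D(.)(Z) *)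
Definition ED_given (l : 'I_L) (b : bool) : R :=
  (\sum_(x : ctype * zvec) b2R (x.2 l == b) * b2R (x.1 x.2) * Pr x) /
  (\sum_(z : zvec) b2R (z l == b) * pZ z).
Definition pil (l : 'I_L) : R := ED_given l true - ED_given l false.

Definition EZ (j : 'I_L) : R := \sum_(z : zvec) b2R (z j) * pZ z.
Definition SigmaZ : 'M[R]_L :=
  \matrix_(j, k) (\sum_(z : zvec) b2R (z j) * b2R (z k) * pZ z - EZ j * EZ k).

Definition posdef (M : 'M[R]_L) :=
  forall v : 'rV[R]_L, v != 0 -> 0 < (v *m M *m v^T) 0 0.

Definition ql (l : 'I_L) (zm : zminus l) : R := pZ (zjoin true zm) / pl l.
Definition q0l (l : 'I_L) (zm : zminus l) : R := pZ (zjoin false zm) / (1 - pl l).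

Definition phi (t : ctype) (l : 'I_L) : R :=
  \sum_(zm : zminus l)
     (b2R (t (zjoin true zm)) * ql zm - b2R (t (zjoin false zm)) * q0l zm).
Definition alpha (t : ctype) (l : 'I_L) : R := theta t * phi t l / pil l.

(* (A1) (restricted to what the statement involves): D_i(.) independent of Z_i *)
Definition A1_indep := forall t z, Pr (t, z) = theta t * pZ z.

Definition mono_type (t : ctype) :=
  forall (l : 'I_L) (zm : zminus l), t (zjoin false zm) ==> t (zjoin true zm).
Definition A2_monotone := forall t, 0 < theta t -> mono_type t.

Definition A3_relevance :=
  (forall l, 0 < pl l) /\ (forall l, 0 < pil l) /\ posdef SigmaZ.

Definition nondecr_fun (l : 'I_L) (f : zminus l -> R) :=
  forall zm wm : zminus l, (forall k, zm k ==> wm k) -> f zm <= f wm.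
Definition A4_PRD :=
  forall (l : 'I_L) (f : zminus l -> R), nondecr_fun f ->
    \sum_(zm : zminus l) f zm * q0l zm <= \sum_(zm : zminus l) f zm * ql zm.

End IV.

(* Main.v *)
Require Import Defs.
From HB Require Import structures.
From mathcomp Require Import all_boot all_order all_algebra.
Import Order.TTheory GRing.Theory Num.Theory.
Local Open Scope ring_scope.

Lemma zjoin_dropE (L : nat) (l : 'I_L) (b : bool) (z : zvec L) (k : 'I_L) :
  zjoin b (zdrop l z) k = if k == l then b else z k.
Proof.
rewrite /zjoin ffunE; case: insubP => [u /= Hu Hv|].
  rewrite ffunE (negbTE Hu); have -> : \val u = k by []; done.
by rewrite negbK => ->.
Qed.

Lemma zjoin_mono (L : nat) (l : 'I_L) (b : bool) (zm wm : zminus l) :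
  (forall k, zm k ==> wm k) -> forall k, zjoin b zm k ==> zjoin b wm k.
Proof.
move=> H k; rewrite /zjoin !ffunE; case: insubP => [u _ _|_] //.
by rewrite implybb.
Qed.

Lemma mono_full (L : nat) (t : ctype L) : mono_type t ->
  forall n (z w : zvec L), (forall k, z k ==> w k) ->
  #|[pred j | z j != w j]| = n -> t z ==> t w.
Proof.
move=> Ht; elim=> [|n IH] z w Hzw Hn.
  have -> : z = w.
    apply/ffunP => k; apply/eqP; apply: contraTT isT => Hk.
    by apply/negP => _; move: Hn; move/card0_eq/(_ k); rewrite inE Hk.
  by rewrite implybb.
have : (0 < #|[pred j | z j != w j]|)%N by rewrite Hn.
case/card_gt0P => j; rewrite inE => Hj.
have [zj wj] : z j = false /\ w j = true.
  by move: (Hzw j) Hj; case: (z j); case: (w j).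
set z' := zjoin true (zdrop j z).
have H1 : t z ==> t z'.
  have := Ht j (zdrop j z).
  suff -> : zjoin false (zdrop j z) = z by [].
  by apply/ffunP => k; rewrite zjoin_dropE; case: eqP => [->|]; rewrite ?zj ?wj.
have H2 : t z' ==> t w.
  apply: (IH z' w).
    by move=> k; rewrite zjoin_dropE; case: eqP => [->|_]; rewrite ?zj ?wj ?implybT.
  apply/eqP; rewrite -eqSS -Hn.
  rewrite (cardD1 j) [in X in _ == X](cardD1 j) !inE zjoin_dropE eqxx zj wj /=.
  apply/eqP; congr (_.+1); apply: eq_card => k; rewrite !inE zjoin_dropE.
  by case: eqP => [->|]; rewrite ?eqxx ?zj ?wj.
by move: H1 H2; case: (t z); case: (t z') => //.
Qed.

Lemma b2R_mono (L : nat) (R : realFieldType) (a b : bool) :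
  a ==> b -> b2R R a <= b2R R b.
Proof. by case: a; case: b => //= _; rewrite /b2R /= ler01. Qed.

Lemma b2R_ge0 (R : realFieldType) (a : bool) : 0 <= b2R R a.
Proof. by rewrite /b2R ler0n. Qed.

Theorem proposition2 (L : nat) (R : realFieldType)
  (Pr : {ffun ctype L * zvec L -> R}) :
  (2 <= L)%N ->
  is_pmf Pr ->
  A1_indep Pr ->
  A2_monotone Pr ->
  A3_relevance Pr ->
  A4_PRD Pr ->
  forall (t : ctype L) (l : 'I_L), 0 <= alpha Pr t l.
Proof.
move=> _ [Pr0 _] _ HA2 [Hpl [Hpi _]] HA4 t l.
have th0 : 0 <= theta Pr t by apply: sumr_ge0 => z _.
rewrite /alpha; apply: divr_ge0; last exact: ltW.
have [th|th] := eqVneq (theta Pr t) 0; first by rewrite th mul0r.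
have Ht : mono_type t by apply: HA2; rewrite lt_def th th0.
apply: mulr_ge0 => //.
have pZ0 : forall z, 0 <= pZ Pr z by move=> z; apply: sumr_ge0.
have ql0 : forall zm : zminus l, 0 <= ql Pr zm.
  by move=> zm; apply: divr_ge0 => //; apply: ltW.
rewrite /phi sumrB subr_ge0.
apply: le_trans (HA4 l (fun zm => b2R R (t (zjoin false zm))) _) _.
  move=> zm wm H; apply: b2R_mono => //.
  apply: (@mono_full _ _ Ht _ _ _ (@zjoin_mono _ _ false _ _ H)); reflexivity.
apply: ler_sum => zm _; apply: ler_wpM2r => //.
exact: b2R_mono (Ht l zm).
Qed.
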